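(* Let $(P,Q):[\tau_0,\infty)\times S^1\to\mathbb{R}^2$ be a smooth solution of \[ P_{\tau\tau}-e^{-2\tau}P_{\theta\theta}-e^{2P}(Q_\tau^2-e^{-2\tau}Q_\theta^2)=0,\qquad Q_{\tau\tau}-e^{-2\tau}Q_{\theta\theta}+2(P_\tau Q_\tau-e^{-2\tau}P_\theta Q_\theta)=0, \] with $\tau_0\ge2$, such that for some $\gamma>0$ and all $\theta\in S^1$, $1\le P(\tau_0,\theta)\le\tau_0-1$ and $\gamma\le P(\tau_0,\theta)/\tau_0\le1-\gamma$, and $F(\tau_0)\le(\gamma-\alpha)^2$ for some $0<\alpha<\gamma$. Then there is a constant $C$ such that for all $\tau\ge\tau_0$, \[ \big\|e^{2P}[Q_\tau^2(\tau,\cdot)+e^{-2\tau}Q_\theta^2(\tau,\cdot)]\big\|_{C^0(S^1,\mathbb{R})}\le Ce^{-\alpha\tau}. \]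
   Context: $S^1=\mathbb{R}/2\pi\mathbb{Z}$; $\|\cdot\|_{C^0}$ is the sup norm. The function $F$ is \[ F(\tau)=\tfrac12\sup_{\theta\in S^1}\Big[(P_\tau-\tfrac1\tau P+e^{-\tau}P_\theta)^2+e^{2P}(Q_\tau+e^{-\tau}Q_\theta)^2\Big] +\tfrac12\sup_{\theta\in S^1}\Big[(P_\tau-\tfrac1\tau P-e^{-\tau}P_\theta)^2+e^{2P}(Q_\tau-e^{-\tau}Q_\theta)^2\Big]. \] *)

(* Defs.v *)
From Stdlib Require Import Reals.
From Coquelicot Require Import Coquelicot.
Open Scope R_scope.

Definition fn2 := R -> R -> R.

Definition d_tau (f : fn2) : fn2 := fun t th => Derive (fun s => f s th) t.
Definition d_th  (f : fn2) : fn2 := fun t th => Derive (fun s => f t s) th.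

Definition cont2 (f : fn2) : Prop :=
  forall t th, continuous (fun p : R * R => f (fst p) (snd p)) (t, th).

Fixpoint Ck (k : nat) (f : fn2) : Prop :=
  match k with
  | O => cont2 f
  | S k' => cont2 f /\
      (forall t th, ex_derive (fun s => f s th) t /\ ex_derive (fun s => f t s) th) /\
      Ck k' (d_tau f) /\ Ck k' (d_th f)
  end.

Definition smooth2 (f : fn2) : Prop := forall k, Ck k f.

(* 2pi-periodicity in theta: f is a function on R x S^1. *)
Definition periodic_th (f : fn2) : Prop :=
  forall t th, f t (th + 2 * PI) = f t th.

(* Supremum over theta in S^1 (= over R, by periodicity), in Rbar. *)
Definition sup_th (g : R -> R) : Rbar :=
  Lub_Rbar (fun y => exists th, y = g th).

(* The function F(tau) of the paper (valued in Rbar; it is finite for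
   smooth periodic P, Q). *)
Definition F_fun (P Q : fn2) (tau : R) : Rbar :=
  Rbar_plus
    (Rbar_mult (Finite (/ 2)) (sup_th (fun th =>
       (d_tau P tau th - / tau * P tau th + exp (- tau) * d_th P tau th) ^ 2
       + exp (2 * P tau th) * (d_tau Q tau th + exp (- tau) * d_th Q tau th) ^ 2)))
    (Rbar_mult (Finite (/ 2)) (sup_th (fun th =>
       (d_tau P tau th - / tau * P tau th - exp (- tau) * d_th P tau th) ^ 2
       + exp (2 * P tau th) * (d_tau Q tau th - exp (- tau) * d_th Q tau th) ^ 2))).

Definition solves_system (P Q : fn2) (tau0 : R) : Prop :=
  forall t th, tau0 <= t ->
    d_tau (d_tau P) t th - exp (- 2 * t) * d_th (d_th P) t th
      - exp (2 * P t th) * ((d_tau Q t th) ^ 2 - exp (- 2 * t) * (d_th Q t th) ^ 2) = 0 /\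
    d_tau (d_tau Q) t th - exp (- 2 * t) * d_th (d_th Q) t th
      + 2 * (d_tau P t th * d_tau Q t th - exp (- 2 * t) * d_th P t th * d_th Q t th) = 0.

(* Main.v *)
Require Import Defs.
From Stdlib Require Import Reals Lra Psatz ZArith Classical.
From Coquelicot Require Import Coquelicot.
Open Scope R_scope.

Lemma Ck_diff (k : nat) : forall f, Ck k f -> forall x y, ex_diff_n f k x y.
Proof.
  induction k as [|k IH]; intros f Hf x y.
  - simpl in *. split; [|exact I].
    apply continuity_2d_pt_filterlim. apply Hf.
  - simpl in Hf. destruct Hf as [Hc [Hd [H1 H2]]].
    simpl. split.
    + apply continuity_2d_pt_filterlim. apply Hc.
    + destruct (Hd x y) as [Ha Hb]. split; [exact Ha|]. split; [exact Hb|].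
      split; [apply (IH _ H1) | apply (IH _ H2)].
Qed.

Lemma smooth_diff f : smooth2 f -> forall k x y, ex_diff_n f k x y.
Proof. intros H k. apply Ck_diff, H. Qed.

Lemma diff2_differentiable f x y :
  (forall u v, ex_diff_n f 2 u v) ->
  differentiable_pt_lim f x y (d_tau f x y) (d_th f x y).
Proof.
  intros H.
  destruct (Taylor_Lagrange_2d f 1 x y) as [D HD].
  { exists (mkposreal 1 Rlt_0_1). intros; apply H. }
  intros eps.
  destruct HD as [d Hd].
  assert (HD0 : 0 <= Rmax D 1) by (apply Rle_trans with 1; [lra| apply Rmax_r]).
  assert (Hpos : 0 < Rmin d (eps / (Rmax D 1 + 1))).
  { apply Rmin_pos. apply cond_pos. apply Rdiv_lt_0_compat. apply cond_pos. lra. }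
  exists (mkposreal _ Hpos). intros u v Hu Hv. simpl in Hu, Hv.
  assert (Hu1 : Rabs (u - x) < d) by (eapply Rlt_le_trans; [exact Hu| apply Rmin_l]).
  assert (Hv1 : Rabs (v - y) < d) by (eapply Rlt_le_trans; [exact Hv| apply Rmin_l]).
  specialize (Hd u v Hu1 Hv1).
  assert (Hpol : DL_pol 1 f x y (u - x) (v - y) = f x y + (d_tau f x y * (u - x) + d_th f x y * (v - y))).
  { unfold DL_pol, differential, partial_derive, d_tau, d_th. simpl. unfold Binomial.C; simpl.
    field. }
  rewrite Hpol in Hd.
  set (m := Rmax (Rabs (u - x)) (Rabs (v - y))) in *.
  assert (Hm0 : 0 <= m) by (unfold m; apply Rle_trans with (Rabs (u-x)); [apply Rabs_pos|apply Rmax_l]).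
  assert (Hm : m <= eps / (Rmax D 1 + 1)).
  { unfold m. apply Rmax_lub; apply Rlt_le.
    eapply Rlt_le_trans; [exact Hu| apply Rmin_r].
    eapply Rlt_le_trans; [exact Hv| apply Rmin_r]. }
  replace (f u v - f x y - (d_tau f x y * (u - x) + d_th f x y * (v - y)))
    with (f u v - (f x y + (d_tau f x y * (u - x) + d_th f x y * (v - y)))) by ring.
  eapply Rle_trans; [exact Hd|].
  assert (HDm : D <= Rmax D 1) by apply Rmax_l.
  assert (Hmm : m * (Rmax D 1 + 1) <= eps).
  { apply Rmult_le_reg_r with (/ (Rmax D 1 + 1)).
    apply Rinv_0_lt_compat; lra.
    rewrite Rmult_assoc, Rinv_r by lra. lra. }
  simpl. nra.
Qed.

Lemma char_deriv f c sg t :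
  (forall u v, ex_diff_n f 2 u v) ->
  is_derive (fun s => f s (c + sg * exp (- s))) t
    (d_tau f t (c + sg * exp (- t)) - sg * exp (- t) * d_th f t (c + sg * exp (- t))).
Proof.
  intros H. apply is_derive_Reals.
  assert (Hc := derivable_pt_lim_comp_2d f (fun s => s) (fun s => c + sg * exp (- s)) t
     (d_tau f t (c + sg * exp (- t))) (d_th f t (c + sg * exp (- t))) 1 (- sg * exp (- t))).
  replace (d_tau f t (c + sg * exp (- t)) - sg * exp (- t) * d_th f t (c + sg * exp (- t)))
    with (d_tau f t (c + sg * exp (- t)) * 1 + d_th f t (c + sg * exp (- t)) * (- sg * exp (- t))) by ring.
  apply Hc.
  - apply diff2_differentiable, H.
  - apply derivable_pt_lim_id.
  - apply is_derive_Reals. auto_derive; [exact I| ring].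
Qed.

Definition per (g : R -> R -> R) := forall t th, g t (th + 2 * PI) = g t th.

Lemma per_nat g : per g -> forall n t th, g t (th + INR n * (2 * PI)) = g t th.
Proof.
  intros H n; induction n as [|n IH]; intros t th.
  - simpl. f_equal; ring.
  - rewrite S_INR. replace (th + (INR n + 1) * (2 * PI)) with ((th + INR n * (2*PI)) + 2 * PI) by ring.
    rewrite H. apply IH.
Qed.

Lemma per_reduce g : per g -> forall t th, exists th', 0 <= th' <= 2 * PI /\ g t th = g t th'.
Proof.
  intros H t th.
  assert (HP := PI_RGT_0).
  set (r := th / (2 * PI)).
  destruct (archimed r) as [H1 H2].
  set (k := (up r - 1)%Z).
  assert (Hk : IZR k <= r < IZR k + 1).
  { unfold k. rewrite minus_IZR. simpl. lra. }
  assert (Hth : th = r * (2 * PI)) by (unfold r; field; lra).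
  destruct (Z_le_gt_dec 0 k) as [Hk0|Hk0].
  - exists (th - IZR k * (2 * PI)). split.
    + rewrite Hth. split; nra.
    + rewrite <- (per_nat g H (Z.to_nat k) t (th - _)).
      rewrite INR_IZR_INZ, Z2Nat.id by exact Hk0. f_equal. ring.
  - exists (th + IZR (- k) * (2 * PI)). split.
    + rewrite opp_IZR. assert (IZR k <= -1). { apply IZR_le. lia. }
      rewrite Hth. split; nra.
    + assert (Hk1 : (0 <= - k)%Z) by lia.
      replace (IZR (- k)) with (INR (Z.to_nat (- k))) by (rewrite INR_IZR_INZ, Z2Nat.id by exact Hk1; reflexivity).
      rewrite per_nat by exact H. reflexivity.
Qed.

Lemma c2d_th g t th : continuity_2d_pt g t th -> continuity_pt (fun v => g t v) th.
Proof.
  intros H. unfold continuity_pt, continue_in, limit1_in, limit_in. intros eps Heps.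
  destruct (H (mkposreal eps Heps)) as [d Hd]. exists d. split. apply cond_pos.
  intros x [_ Hx]. simpl in *. unfold R_dist in *. apply Hd.
  rewrite Rminus_eq_0, Rabs_R0; apply cond_pos. exact Hx.
Qed.

Lemma per_max g : (forall t th, continuity_2d_pt g t th) -> per g ->
  forall t, exists thm, forall th, g t th <= g t thm.
Proof.
  intros Hc Hp t.
  assert (HP := PI_RGT_0).
  destruct (continuity_ab_maj (fun v => g t v) 0 (2 * PI)) as [M [HM _]].
  lra. intros c _. apply c2d_th, Hc.
  exists M. intros th. destruct (per_reduce g Hp t th) as [th' [Hr Heq]].
  rewrite Heq. apply HM, Hr.
Qed.

Lemma deriv_neg_left f x l : is_derive f x l -> l < 0 ->
  exists d, 0 < d /\ forall h, 0 < h < d -> f x < f (x - h).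
Proof.
  intros Hd Hl. apply is_derive_Reals in Hd.
  destruct (Hd (- l / 2)) as [d Hd']. lra.
  exists d. split. apply cond_pos. intros h Hh.
  assert (Hh0 : - h <> 0) by lra.
  assert (Hha : Rabs (- h) < d) by (rewrite Rabs_Ropp, Rabs_pos_eq; lra).
  specialize (Hd' (- h) Hh0 Hha).
  apply Rabs_def2 in Hd'. destruct Hd' as [Ha Hb].
  replace (x + - h) with (x - h) in * by ring.
  set (q := (f (x - h) - f x) / - h) in *.
  assert (Hq : f (x - h) - f x = q * (- h)) by (unfold q; field; lra).
  nra.
Qed.

Lemma GBL (g1 g2 : R -> R -> R) (B : R -> R) (T0 : R) :
  (forall t th, continuity_2d_pt g1 t th) -> (forall t th, continuity_2d_pt g2 t th) ->
  per g1 -> per g2 -> (forall s, ex_derive B s) ->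
  (forall th1 th2, g1 T0 th1 + g2 T0 th2 < B T0) ->
  (forall t th1 th2, T0 < t -> (forall p1 p2, g1 t p1 + g2 t p2 <= B t) ->
      g1 t th1 + g2 t th2 = B t ->
     exists D1 D2, is_derive (fun s => g1 s (th1 - exp (- t) + 1 * exp (- s))) t D1 /\
       is_derive (fun s => g2 s (th2 + exp (- t) + -1 * exp (- s))) t D2 /\
       D1 + D2 < Derive B t) ->
  forall t th1 th2, T0 <= t -> g1 t th1 + g2 t th2 < B t.
Proof.
  intros Hc1 Hc2 Hp1 Hp2 HB Hinit Htouch t th1 th2 Ht.
  assert (HP := PI_RGT_0).
  assert (HBc : forall s eps, 0 < eps -> exists d, 0 < d /\ forall u, Rabs (u - s) < d -> Rabs (B u - B s) < eps).
  { intros s eps Heps.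
    assert (Hcs : continuity_pt B s) by (apply continuity_pt_filterlim; apply (@ex_derive_continuous R_AbsRing R_NormedModule); apply HB).
    destruct (Hcs eps Heps) as [d [Hd Hd']]. exists d. split; auto.
    intros u Hu. destruct (Req_dec u s) as [->|Hne].
    - rewrite Rminus_eq_0, Rabs_R0; lra.
    - apply (Hd' u). split. split. exact I. auto. exact Hu. }
  apply Rnot_le_lt; intro Hbad.
  set (S := fun s => T0 <= s <= t /\ exists p1 p2, B s <= g1 s p1 + g2 s p2).
  set (E := fun z => S (- z)).
  assert (HEb : bound E).
  { exists (- T0). intros z [[Hz _] _]. lra. }
  assert (HEn : exists z, E z).
  { exists (- t). unfold E, S. rewrite Ropp_involutive. split. lra. exists th1, th2. lra. }
  destruct (completeness E HEb HEn) as [m [Hm1 Hm2]].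
  set (T := - m).
  assert (Hlow : forall s, S s -> T <= s).
  { intros s Hs. assert (E (- s)) by (unfold E; rewrite Ropp_involutive; exact Hs).
    specialize (Hm1 _ H). unfold T. lra. }
  assert (Hgreat : forall b, (forall s, S s -> b <= s) -> b <= T).
  { intros b Hb. assert (m <= - b). apply Hm2. intros z Hz. specialize (Hb _ Hz). lra.
    unfold T; lra. }
  assert (HT0 : T0 <= T) by (apply Hgreat; intros s [[Hs _] _]; exact Hs).
  assert (HTt : T <= t).
  { apply Hlow. split. lra. exists th1, th2. lra. }
  assert (HA : forall s, T0 <= s < T -> forall p1 p2, g1 s p1 + g2 s p2 < B s).
  { intros s Hs p1 p2. apply Rnot_le_lt. intro Hn.
    assert (S s). { split. lra. exists p1, p2. exact Hn. }
    specialize (Hlow _ H). lra. }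
  assert (HBm : exists p1 p2, B T <= g1 T p1 + g2 T p2).
  { apply NNPP. intro Hno.
    assert (Hall : forall p1 p2, g1 T p1 + g2 T p2 < B T).
    { intros p1 p2. apply Rnot_le_lt. intro Hn. apply Hno. exists p1, p2. exact Hn. }
    destruct (per_max g1 Hc1 Hp1 T) as [q1 Hq1].
    destruct (per_max g2 Hc2 Hp2 T) as [q2 Hq2].
    set (eta := B T - g1 T q1 - g2 T q2).
    assert (Heta : 0 < eta) by (unfold eta; specialize (Hall q1 q2); lra).
    assert (Heta3 : 0 < eta / 3) by lra.
    destruct (uniform_continuity_2d g1 T (T + 1) 0 (2 * PI)) with (eps := mkposreal _ Heta3) as [d1 Hd1].
    { intros; apply Hc1. }
    destruct (uniform_continuity_2d g2 T (T + 1) 0 (2 * PI)) with (eps := mkposreal _ Heta3) as [d2 Hd2].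
    { intros; apply Hc2. }
    destruct (HBc T (eta / 3) Heta3) as [d3 [Hd3 Hd3']].
    set (d := Rmin (Rmin d1 d2) (Rmin d3 1)).
    assert (Hd : 0 < d).
    { unfold d. repeat apply Rmin_pos; try apply cond_pos; lra. }
    assert (Hdd1 : d <= d1) by (unfold d; eapply Rle_trans; [apply Rmin_l| apply Rmin_l]).
    assert (Hdd2 : d <= d2) by (unfold d; eapply Rle_trans; [apply Rmin_l| apply Rmin_r]).
    assert (Hdd3 : d <= d3) by (unfold d; eapply Rle_trans; [apply Rmin_r| apply Rmin_l]).
    assert (Hdd4 : d <= 1) by (unfold d; eapply Rle_trans; [apply Rmin_r| apply Rmin_r]).
    assert (T + d / 2 <= T).
    { apply Hgreat. intros s Hs. apply Rnot_lt_le. intro Hlt.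
      assert (HTs := Hlow s Hs).
      destruct Hs as [_ [p1 [p2 Hp]]].
      destruct (per_reduce g1 Hp1 s p1) as [p1' [Hr1 He1]].
      destruct (per_reduce g2 Hp2 s p2) as [p2' [Hr2 He2]].
      rewrite He1, He2 in Hp.
      assert (Hs1 : Rabs (s - T) < d) by (rewrite Rabs_pos_eq; lra).
      assert (Hz : Rabs (p1' - p1') < d1) by (rewrite Rminus_eq_0, Rabs_R0; apply cond_pos).
      assert (Hz2 : Rabs (p2' - p2') < d2) by (rewrite Rminus_eq_0, Rabs_R0; apply cond_pos).
      assert (A1 := Hd1 T p1' s p1' ltac:(lra) Hr1 ltac:(lra) Hr1 ltac:(lra) Hz).
      assert (A2 := Hd2 T p2' s p2' ltac:(lra) Hr2 ltac:(lra) Hr2 ltac:(lra) Hz2).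
      assert (A3 := Hd3' s ltac:(lra)).
      simpl in A1, A2.
      apply Rabs_def2 in A1. apply Rabs_def2 in A2. apply Rabs_def2 in A3.
      specialize (Hq1 p1'). specialize (Hq2 p2'). unfold eta in *. lra. }
    lra. }
  assert (HT0' : T0 < T).
  { destruct HBm as [p1 [p2 Hp]]. destruct (Req_dec T T0) as [He|Hne]; [|lra].
    rewrite He in Hp. specialize (Hinit p1 p2). lra. }
  assert (HC : forall p1 p2, g1 T p1 + g2 T p2 <= B T).
  { intros p1 p2. apply Rnot_lt_le. intro Hgt.
    set (eta := g1 T p1 + g2 T p2 - B T).
    assert (Heta : 0 < eta / 3) by (unfold eta; lra).
    destruct (Hc1 T p1 (mkposreal _ Heta)) as [d1 Hd1].
    destruct (Hc2 T p2 (mkposreal _ Heta)) as [d2 Hd2].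
    destruct (HBc T (eta / 3) Heta) as [d3 [Hd3 Hd3']].
    set (d := Rmin (Rmin d1 d2) (Rmin d3 (T - T0))).
    assert (Hd : 0 < d).
    { unfold d. repeat apply Rmin_pos; try apply cond_pos; lra. }
    assert (Hdd1 : d <= d1) by (unfold d; eapply Rle_trans; [apply Rmin_l| apply Rmin_l]).
    assert (Hdd2 : d <= d2) by (unfold d; eapply Rle_trans; [apply Rmin_l| apply Rmin_r]).
    assert (Hdd3 : d <= d3) by (unfold d; eapply Rle_trans; [apply Rmin_r| apply Rmin_l]).
    assert (Hdd4 : d <= T - T0) by (unfold d; eapply Rle_trans; [apply Rmin_r| apply Rmin_r]).
    set (s := T - d / 2).
    assert (Hs : Rabs (s - T) < d) by (unfold s; rewrite Rabs_left; lra).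
    assert (Hz : Rabs (p1 - p1) < d1) by (rewrite Rminus_eq_0, Rabs_R0; apply cond_pos).
    assert (Hz2 : Rabs (p2 - p2) < d2) by (rewrite Rminus_eq_0, Rabs_R0; apply cond_pos).
    assert (A1 := Hd1 s p1 ltac:(lra) Hz).
    assert (A2 := Hd2 s p2 ltac:(lra) Hz2).
    assert (A3 := Hd3' s ltac:(lra)).
    simpl in A1, A2.
    apply Rabs_def2 in A1. apply Rabs_def2 in A2. apply Rabs_def2 in A3.
    assert (HAs := HA s ltac:(unfold s; lra) p1 p2). unfold eta in *. lra. }
  destruct HBm as [q1 [q2 Hq]].
  assert (Heq : g1 T q1 + g2 T q2 = B T) by (specialize (HC q1 q2); lra).
  destruct (Htouch T q1 q2 HT0' HC Heq) as [D1 [D2 [HD1 [HD2 HDl]]]].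
  set (f := fun s => g1 s (q1 - exp (- T) + 1 * exp (- s)) + g2 s (q2 + exp (- T) + -1 * exp (- s)) - B s).
  assert (Hf : is_derive f T (D1 + D2 - Derive B T)).
  { unfold f. apply @is_derive_minus. apply @is_derive_plus; assumption.
    apply Derive_correct, HB. }
  destruct (deriv_neg_left f T _ Hf ltac:(lra)) as [d [Hd Hd']].
  set (h := Rmin (d / 2) ((T - T0) / 2)).
  assert (Hh : 0 < h < d).
  { unfold h. split. apply Rmin_pos; lra. eapply Rle_lt_trans. apply Rmin_l. lra. }
  assert (Hh2 : h <= (T - T0) / 2) by apply Rmin_r.
  specialize (Hd' h Hh).
  assert (HfT : f T = 0).
  { unfold f. replace (q1 - exp (- T) + 1 * exp (- T)) with q1 by ring.
    replace (q2 + exp (- T) + -1 * exp (- T)) with q2 by ring. lra. }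
  assert (HAs := HA (T - h) ltac:(lra) (q1 - exp (- T) + 1 * exp (- (T - h))) (q2 + exp (- T) + -1 * exp (- (T - h)))).
  rewrite HfT in Hd'. unfold f in Hd'. cbv beta in Hd'. lra.
Qed.

Lemma ed_split f n x y : ex_diff_n f (S n) x y ->
  continuity_2d_pt f x y /\ ex_derive (fun z => f z y) x /\ ex_derive (fun z => f x z) y /\
  ex_diff_n (d_tau f) n x y /\ ex_diff_n (d_th f) n x y.
Proof. simpl. tauto. Qed.

Lemma ed_cont f n x y : ex_diff_n f n x y -> continuity_2d_pt f x y.
Proof. destruct n; simpl; tauto. Qed.

Lemma ed_tau f n : (forall x y, ex_diff_n f (S n) x y) -> forall x y, ex_diff_n (d_tau f) n x y.
Proof. intros H x y. apply (ed_split f n x y (H x y)). Qed.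

Lemma ed_th f n : (forall x y, ex_diff_n f (S n) x y) -> forall x y, ex_diff_n (d_th f) n x y.
Proof. intros H x y. apply (ed_split f n x y (H x y)). Qed.

Lemma schwarz f x y : (forall u v, ex_diff_n f 3 u v) ->
  d_tau (d_th f) x y = d_th (d_tau f) x y.
Proof.
  intros H. unfold d_tau, d_th.
  apply Schwarz.
  - exists (mkposreal 1 Rlt_0_1). intros u v _ _.
    destruct (ed_split f 2 u v (H u v)) as [_ [Ha [Hb [Hc Hd]]]].
    destruct (ed_split _ 1 u v Hc) as [_ [_ [Hc2 _]]].
    destruct (ed_split _ 1 u v Hd) as [_ [Hd1 _]].
    repeat split; assumption.
  - destruct (ed_split f 2 x y (H x y)) as [_ [_ [_ [_ Hd]]]].
    destruct (ed_split _ 1 x y Hd) as [_ [_ [_ [Hd1 _]]]].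
    exact (ed_cont _ _ _ _ Hd1).
  - destruct (ed_split f 2 x y (H x y)) as [_ [_ [_ [Hc _]]]].
    destruct (ed_split _ 1 x y Hc) as [_ [_ [_ [_ Hc2]]]].
    exact (ed_cont _ _ _ _ Hc2).
Qed.

Lemma per_tau f : per f -> per (d_tau f).
Proof.
  intros H t th. unfold d_tau. apply Derive_ext. intros s. apply H.
Qed.

Lemma per_th f : per f -> (forall x y, ex_derive (fun z => f x z) y) -> per (d_th f).
Proof.
  intros H Hd t th. unfold d_th.
  destruct (Hd t (th + 2 * PI)) as [l Hl].
  transitivity l. apply is_derive_unique; exact Hl.
  symmetry. apply is_derive_unique.
  assert (Hc : is_derive (fun s => f t (s + 2 * PI)) th (1 * l)).
  { apply (is_derive_comp (fun s => f t s) (fun s => s + 2 * PI)). exact Hl.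
    auto_derive; [exact I| ring]. }
  rewrite Rmult_1_l in Hc.
  eapply is_derive_ext; [|exact Hc]. intros s. simpl. apply H.
Qed.

Lemma c2_expm t th : continuity_2d_pt (fun u _ => exp (- u)) t th.
Proof.
  apply (continuity_1d_2d_pt_comp exp (fun u _ => - u)).
  apply derivable_continuous_pt, derivable_pt_exp.
  apply continuity_2d_pt_opp, continuity_2d_pt_id1.
Qed.

Lemma c2_exp f t th : continuity_2d_pt f t th -> continuity_2d_pt (fun u v => exp (f u v)) t th.
Proof.
  intros H. apply (continuity_1d_2d_pt_comp exp f).
  apply derivable_continuous_pt, derivable_pt_exp. exact H.
Qed.

Lemma c2_pow2 f t th : continuity_2d_pt f t th -> continuity_2d_pt (fun u v => f u v ^ 2) t th.
Proof.
  intros H. simpl. apply continuity_2d_pt_ext with (fun u v => f u v * (f u v * 1)).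
  { intros; simpl; ring. }
  apply continuity_2d_pt_mult; auto. apply continuity_2d_pt_mult; auto.
  apply continuity_2d_pt_const.
Qed.

Lemma deriv_e (w : R) (A Bh Pc C Dh : R -> R) s a b p c d :
  is_derive A s a -> is_derive Bh s b -> is_derive Pc s p -> is_derive C s c -> is_derive Dh s d ->
  is_derive (fun s => (A s + w * exp (- s) * Bh s - /2)^2 + (exp (Pc s) * (C s + w * exp (- s) * Dh s))^2) s
   (2*(A s + w*exp(-s)*Bh s - /2)*(a + w*(- exp(-s) * Bh s + exp(-s)*b))
    + 2*(exp(Pc s)*(C s + w*exp(-s)*Dh s))*(exp(Pc s)*p*(C s + w*exp(-s)*Dh s) + exp(Pc s)*(c + w*(- exp(-s)*Dh s + exp(-s)*d)))).
Proof.
  intros HA HB HP HC HD.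
  auto_derive.
  - repeat split; eexists; eassumption.
  - replace (Derive (fun x => A x) s) with a by (symmetry; apply is_derive_unique; exact HA).
    replace (Derive (fun x => Bh x) s) with b by (symmetry; apply is_derive_unique; exact HB).
    replace (Derive (fun x => Pc x) s) with p by (symmetry; apply is_derive_unique; exact HP).
    replace (Derive (fun x => C x) s) with c by (symmetry; apply is_derive_unique; exact HC).
    replace (Derive (fun x => Dh x) s) with d by (symmetry; apply is_derive_unique; exact HD).
    ring.
Qed.

Lemma deriv_b (w : R) (Pc C Dh : R -> R) s p c d :
  is_derive Pc s p -> is_derive C s c -> is_derive Dh s d ->
  is_derive (fun s => (exp (Pc s) * (C s + w * exp (- s) * Dh s))^2) s
   (2*(exp(Pc s)*(C s + w*exp(-s)*Dh s))*(exp(Pc s)*p*(C s + w*exp(-s)*Dh s) + exp(Pc s)*(c + w*(- exp(-s)*Dh s + exp(-s)*d)))).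
Proof.
  intros HP HC HD.
  auto_derive.
  - repeat split; eexists; eassumption.
  - replace (Derive (fun x => Pc x) s) with p by (symmetry; apply is_derive_unique; exact HP).
    replace (Derive (fun x => C x) s) with c by (symmetry; apply is_derive_unique; exact HC).
    replace (Derive (fun x => Dh x) s) with d by (symmetry; apply is_derive_unique; exact HD).
    ring.
Qed.

Definition Zf (w : R) (P : fn2) t th := d_tau P t th + w * exp (- t) * d_th P t th - /2.
Definition bf (w : R) (P Q : fn2) t th := exp (P t th) * (d_tau Q t th + w * exp (- t) * d_th Q t th).
Definition ef w P Q t th := Zf w P t th ^ 2 + bf w P Q t th ^ 2.

Lemma exp_m2 t : exp (- 2 * t) = exp (- t) * exp (- t).
Proof. rewrite <- exp_plus. f_equal. ring. Qed.
Lemma exp_2 p : exp (2 * p) = exp p * exp p.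
Proof. rewrite <- exp_plus. f_equal. ring. Qed.

Lemma ef_char P Q T0 w c t :
  (forall k x y, ex_diff_n P k x y) -> (forall k x y, ex_diff_n Q k x y) ->
  solves_system P Q T0 -> T0 <= t -> (w = 1 \/ w = -1) ->
  is_derive (fun s => ef w P Q s (c + w * exp (- s))) t
    (- ef w P Q t (c + w * exp (- t)) + Zf 1 P t (c + w * exp (- t)) * Zf (-1) P t (c + w * exp (- t))).
Proof.
  intros HP HQ Hs Ht Hw.
  set (th := c + w * exp (- t)).
  assert (HP2 : forall x y, ex_diff_n P 2 x y) by auto.
  assert (HQ2 : forall x y, ex_diff_n Q 2 x y) by auto.
  assert (HPt : forall x y, ex_diff_n (d_tau P) 2 x y) by (apply ed_tau; auto).
  assert (HPh : forall x y, ex_diff_n (d_th P) 2 x y) by (apply ed_th; auto).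
  assert (HQt : forall x y, ex_diff_n (d_tau Q) 2 x y) by (apply ed_tau; auto).
  assert (HQh : forall x y, ex_diff_n (d_th Q) 2 x y) by (apply ed_th; auto).
  assert (H := deriv_e w (fun s => d_tau P s (c + w * exp (- s))) (fun s => d_th P s (c + w * exp (- s)))
     (fun s => P s (c + w * exp (- s))) (fun s => d_tau Q s (c + w * exp (- s))) (fun s => d_th Q s (c + w * exp (- s))) t
     _ _ _ _ _ (char_deriv _ c w t HPt) (char_deriv _ c w t HPh) (char_deriv _ c w t HP2)
     (char_deriv _ c w t HQt) (char_deriv _ c w t HQh)).
  cbv beta in H. fold th in H.
  destruct (Hs t th Ht) as [E1 E2].
  assert (Sw := schwarz P t th (HP 3%nat)).
  assert (SwQ := schwarz Q t th (HQ 3%nat)).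
  rewrite exp_m2, exp_2 in E1. rewrite exp_m2 in E2.
  assert (E1' : d_tau (d_tau P) t th = exp (- t) * exp (- t) * d_th (d_th P) t th +
     exp (P t th) * exp (P t th) * (d_tau Q t th ^ 2 - exp (- t) * exp (- t) * d_th Q t th ^ 2)) by lra.
  assert (E2' : d_tau (d_tau Q) t th = exp (- t) * exp (- t) * d_th (d_th Q) t th -
     2 * (d_tau P t th * d_tau Q t th - exp (- t) * exp (- t) * d_th P t th * d_th Q t th)) by lra.
  rewrite <- Sw, <- SwQ, E1', E2' in H.
  eapply is_derive_ext in H; [|intros s; reflexivity].
  replace (- ef w P Q t th + Zf 1 P t th * Zf (-1) P t th) with
    (2 * (d_tau P t th + w * exp (- t) * d_th P t th - / 2) *
       (exp (- t) * exp (- t) * d_th (d_th P) t th +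
        exp (P t th) * exp (P t th) *
        (d_tau Q t th ^ 2 - exp (- t) * exp (- t) * d_th Q t th ^ 2) -
        w * exp (- t) * d_tau (d_th P) t th +
        w * (- exp (- t) * d_th P t th + exp (- t) * (d_tau (d_th P) t th - w * exp (- t) * d_th (d_th P) t th))) +
     2 * (exp (P t th) * (d_tau Q t th + w * exp (- t) * d_th Q t th)) *
     (exp (P t th) * (d_tau P t th - w * exp (- t) * d_th P t th) *
      (d_tau Q t th + w * exp (- t) * d_th Q t th) +
      exp (P t th) *
      (exp (- t) * exp (- t) * d_th (d_th Q) t th -
       2 * (d_tau P t th * d_tau Q t th - exp (- t) * exp (- t) * d_th P t th * d_th Q t th) -
       w * exp (- t) * d_tau (d_th Q) t th +
       w * (- exp (- t) * d_th Q t th + exp (- t) * (d_tau (d_th Q) t th - w * exp (- t) * d_th (d_th Q) t th))))).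
  - exact H.
  - unfold ef, Zf, bf. destruct Hw as [-> | ->]; field.
Qed.

Lemma bf_char P Q T0 w c t :
  (forall k x y, ex_diff_n P k x y) -> (forall k x y, ex_diff_n Q k x y) ->
  solves_system P Q T0 -> T0 <= t -> (w = 1 \/ w = -1) ->
  is_derive (fun s => bf w P Q s (c + w * exp (- s)) ^ 2) t
    (- bf w P Q t (c + w * exp (- t)) ^ 2 - 2 * Zf w P t (c + w * exp (- t)) *
        bf 1 P Q t (c + w * exp (- t)) * bf (-1) P Q t (c + w * exp (- t))).
Proof.
  intros HP HQ Hs Ht Hw.
  set (th := c + w * exp (- t)).
  assert (HP2 : forall x y, ex_diff_n P 2 x y) by auto.
  assert (HQ2 : forall x y, ex_diff_n Q 2 x y) by auto.
  assert (HQt : forall x y, ex_diff_n (d_tau Q) 2 x y) by (apply ed_tau; auto).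
  assert (HQh : forall x y, ex_diff_n (d_th Q) 2 x y) by (apply ed_th; auto).
  assert (H := deriv_b w
     (fun s => P s (c + w * exp (- s))) (fun s => d_tau Q s (c + w * exp (- s))) (fun s => d_th Q s (c + w * exp (- s))) t
     _ _ _ (char_deriv _ c w t HP2)
     (char_deriv _ c w t HQt) (char_deriv _ c w t HQh)).
  cbv beta in H. fold th in H.
  destruct (Hs t th Ht) as [E1 E2].
  assert (SwQ := schwarz Q t th (HQ 3%nat)).
  rewrite exp_m2, exp_2 in E1. rewrite exp_m2 in E2.
  assert (E2' : d_tau (d_tau Q) t th = exp (- t) * exp (- t) * d_th (d_th Q) t th -
     2 * (d_tau P t th * d_tau Q t th - exp (- t) * exp (- t) * d_th P t th * d_th Q t th)) by lra.
  rewrite <- SwQ, E2' in H.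
  eapply is_derive_ext in H; [|intros s; reflexivity].
  replace (- bf w P Q t th ^ 2 - 2 * Zf w P t th * bf 1 P Q t th * bf (-1) P Q t th) with
    (2 * (exp (P t th) * (d_tau Q t th + w * exp (- t) * d_th Q t th)) *
     (exp (P t th) * (d_tau P t th - w * exp (- t) * d_th P t th) *
      (d_tau Q t th + w * exp (- t) * d_th Q t th) +
      exp (P t th) *
      (exp (- t) * exp (- t) * d_th (d_th Q) t th -
       2 * (d_tau P t th * d_tau Q t th - exp (- t) * exp (- t) * d_th P t th * d_th Q t th) -
       w * exp (- t) * d_tau (d_th Q) t th +
       w * (- exp (- t) * d_th Q t th + exp (- t) * (d_tau (d_th Q) t th - w * exp (- t) * d_th (d_th Q) t th))))).
  - exact H.
  - unfold Zf, bf. destruct Hw as [-> | ->]; field.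
Qed.

Lemma ct_tau f : (forall k x y, ex_diff_n f k x y) -> forall t th, continuity_2d_pt (d_tau f) t th.
Proof. intros H t th. destruct (ed_split f 0 t th (H 1%nat t th)) as [_ [_ [_ [A _]]]]. exact (ed_cont _ _ _ _ A). Qed.
Lemma ct_th f : (forall k x y, ex_diff_n f k x y) -> forall t th, continuity_2d_pt (d_th f) t th.
Proof. intros H t th. destruct (ed_split f 0 t th (H 1%nat t th)) as [_ [_ [_ [_ A]]]]. exact (ed_cont _ _ _ _ A). Qed.
Lemma ct_f f : (forall k x y, ex_diff_n f k x y) -> forall t th, continuity_2d_pt f t th.
Proof. intros H t th. exact (ed_cont _ _ _ _ (H 0%nat t th)). Qed.

Lemma ct_wexp w t th : continuity_2d_pt (fun u v : R => w * exp (- u)) t th.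
Proof.
  apply (continuity_2d_pt_mult (fun _ _ => w) (fun u _ => exp (- u))).
  apply continuity_2d_pt_const. apply c2_expm.
Qed.

Lemma ct_Zf w P : (forall k x y, ex_diff_n P k x y) -> forall t th, continuity_2d_pt (Zf w P) t th.
Proof.
  intros H t th. unfold Zf.
  apply (continuity_2d_pt_minus (fun u v => d_tau P u v + w * exp (- u) * d_th P u v) (fun _ _ => /2)).
  apply (continuity_2d_pt_plus (d_tau P) (fun u v => w * exp (- u) * d_th P u v)).
  apply ct_tau; auto.
  apply (continuity_2d_pt_mult (fun u v => w * exp (- u)) (d_th P)).
  apply ct_wexp. apply ct_th; auto.
  apply continuity_2d_pt_const.
Qed.

Lemma ct_bf w P Q : (forall k x y, ex_diff_n P k x y) -> (forall k x y, ex_diff_n Q k x y) ->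
  forall t th, continuity_2d_pt (bf w P Q) t th.
Proof.
  intros HP HQ t th. unfold bf.
  apply (continuity_2d_pt_mult (fun u v => exp (P u v)) (fun u v => d_tau Q u v + w * exp (- u) * d_th Q u v)).
  apply c2_exp. apply ct_f; auto.
  apply (continuity_2d_pt_plus (d_tau Q) (fun u v => w * exp (- u) * d_th Q u v)).
  apply ct_tau; auto.
  apply (continuity_2d_pt_mult (fun u v => w * exp (- u)) (d_th Q)).
  apply ct_wexp. apply ct_th; auto.
Qed.

Lemma ct_bf2 w P Q : (forall k x y, ex_diff_n P k x y) -> (forall k x y, ex_diff_n Q k x y) ->
  forall t th, continuity_2d_pt (fun u v => bf w P Q u v ^ 2) t th.
Proof. intros. apply (c2_pow2 (bf w P Q)). apply ct_bf; auto. Qed.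

Lemma ct_ef w P Q : (forall k x y, ex_diff_n P k x y) -> (forall k x y, ex_diff_n Q k x y) ->
  forall t th, continuity_2d_pt (ef w P Q) t th.
Proof.
  intros HP HQ t th. unfold ef.
  apply (continuity_2d_pt_plus (fun u v => Zf w P u v ^ 2) (fun u v => bf w P Q u v ^ 2)).
  apply (c2_pow2 (Zf w P)). apply ct_Zf; auto.
  apply ct_bf2; auto.
Qed.

Lemma exd_th f : (forall k x y, ex_diff_n f k x y) -> forall x y, ex_derive (fun z => f x z) y.
Proof. intros H x y. destruct (ed_split f 0 x y (H 1%nat x y)) as [_ [_ [A _]]]. exact A. Qed.

Lemma pr_Zf w P : (forall k x y, ex_diff_n P k x y) -> per P -> per (Zf w P).
Proof.
  intros H Hp t th. unfold Zf.
  rewrite (per_tau P Hp), (per_th P Hp (exd_th P H)). reflexivity.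
Qed.

Lemma pr_bf w P Q : (forall k x y, ex_diff_n Q k x y) -> per P -> per Q -> per (bf w P Q).
Proof.
  intros H Hp Hq t th. unfold bf.
  rewrite (per_tau Q Hq), (per_th Q Hq (exd_th Q H)), Hp. reflexivity.
Qed.

Lemma pr_ef w P Q : (forall k x y, ex_diff_n P k x y) -> (forall k x y, ex_diff_n Q k x y) -> per P -> per Q -> per (ef w P Q).
Proof.
  intros HP HQ Hp Hq t th. unfold ef.
  rewrite (pr_Zf w P HP Hp), (pr_bf w P Q HQ Hp Hq). reflexivity.
Qed.

Lemma pr_bf2 w P Q : (forall k x y, ex_diff_n Q k x y) -> per P -> per Q -> per (fun u v => bf w P Q u v ^ 2).
Proof. intros HQ Hp Hq t th. simpl. rewrite (pr_bf w P Q HQ Hp Hq). reflexivity. Qed.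

Lemma pr_0 : per (fun _ _ => 0).
Proof. intros t th. reflexivity. Qed.

Lemma ct_0 t th : continuity_2d_pt (fun _ _ => 0) t th.
Proof. apply continuity_2d_pt_const. Qed.

Lemma sup_cases g : (exists S, sup_th g = Finite S /\ forall th, g th <= S) \/ sup_th g = p_infty.
Proof.
  unfold sup_th.
  destruct (Lub_Rbar_correct (fun y => exists th, y = g th)) as [Hub _].
  destruct (Lub_Rbar (fun y => exists th, y = g th)) as [S| |] eqn:E.
  - left. exists S. split; auto. intros th. apply (Hub (g th)). exists th; auto.
  - right; auto.
  - exfalso. specialize (Hub (g 0) (ex_intro _ 0 eq_refl)). simpl in Hub. exact Hub.
Qed.

Lemma half_pinf : Rbar_mult (Finite (/ 2)) p_infty = p_infty.
Proof.
  simpl. destruct (Rle_dec 0 (/ 2)) as [H|H].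
  - destruct (Rle_lt_or_eq_dec 0 (/ 2) H) as [_|H']; auto. exfalso. lra.
  - exfalso. lra.
Qed.

Lemma F_extract g1 g2 r :
  Rbar_le (Rbar_plus (Rbar_mult (Finite (/ 2)) (sup_th g1)) (Rbar_mult (Finite (/ 2)) (sup_th g2))) (Finite r) ->
  exists S1 S2, (forall th, g1 th <= S1) /\ (forall th, g2 th <= S2) /\ / 2 * S1 + / 2 * S2 <= r.
Proof.
  intros H.
  destruct (sup_cases g1) as [[S1 [E1 H1]]|E1]; destruct (sup_cases g2) as [[S2 [E2 H2]]|E2];
    rewrite ?E1, ?E2, ?half_pinf in H.
  - exists S1, S2. simpl in H. auto.
  - simpl in H. contradiction.
  - simpl in H. contradiction.
  - simpl in H. contradiction.
Qed.

Lemma alg0 k1 k2 a1 a2 b1 b2 S1 S2 c d :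
  Rabs k1 <= c -> Rabs k2 <= c -> 0 <= d -> a1 ^ 2 + b1 ^ 2 <= S1 -> a2 ^ 2 + b2 ^ 2 <= S2 ->
  / 2 * S1 + / 2 * S2 <= d ^ 2 ->
  (k1 + a1) ^ 2 + b1 ^ 2 + ((k2 + a2) ^ 2 + b2 ^ 2) <= 2 * (c + d) ^ 2.
Proof.
  intros Hk1 Hk2 Hd H1 H2 HS.
  set (u := Rabs a1). set (v := Rabs a2).
  assert (Hu : u ^ 2 = a1 ^ 2) by (unfold u; rewrite <- !Rsqr_pow2; symmetry; apply Rsqr_abs).
  assert (Hv : v ^ 2 = a2 ^ 2) by (unfold v; rewrite <- !Rsqr_pow2; symmetry; apply Rsqr_abs).
  assert (Hu0 : 0 <= u) by apply Rabs_pos.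
  assert (Hv0 : 0 <= v) by apply Rabs_pos.
  assert (Huv : u + v <= 2 * d).
  { apply Rnot_lt_le. intro Hlt. assert (Hb1 : 0 <= b1 ^ 2) by nra. assert (Hb2 : 0 <= b2 ^ 2) by nra.
    assert (Q1 : (2 * d) ^ 2 < (u + v) ^ 2).
    { assert (0 < (u + v - 2 * d) * (u + v + 2 * d)) by (apply Rmult_lt_0_compat; lra).
      replace ((u + v) ^ 2) with ((2 * d) ^ 2 + (u + v - 2 * d) * (u + v + 2 * d)) by ring. lra. }
    assert (Q2 : 0 <= (u - v) ^ 2) by apply pow2_ge_0.
    assert (Q3 : (u + v) ^ 2 <= 2 * (u ^ 2 + v ^ 2)) by (clear - Q2; nra).
    clear - Q1 Q3 Hu Hv H1 H2 HS Hb1 Hb2. nra. }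
  assert (Hk1a : k1 * a1 <= c * u).
  { unfold u. apply Rle_trans with (Rabs (k1 * a1)). apply Rle_abs. rewrite Rabs_mult.
    apply Rmult_le_compat_r. apply Rabs_pos. exact Hk1. }
  assert (Hk2a : k2 * a2 <= c * v).
  { unfold v. apply Rle_trans with (Rabs (k2 * a2)). apply Rle_abs. rewrite Rabs_mult.
    apply Rmult_le_compat_r. apply Rabs_pos. exact Hk2. }
  assert (Hk1s : k1 ^ 2 <= c ^ 2).
  { rewrite <- !Rsqr_pow2, Rsqr_abs. apply Rsqr_le_abs_1. rewrite Rabs_Rabsolu.
    apply Rle_trans with c; [exact Hk1| apply Rle_abs]. }
  assert (Hk2s : k2 ^ 2 <= c ^ 2).
  { rewrite <- !Rsqr_pow2, Rsqr_abs. apply Rsqr_le_abs_1. rewrite Rabs_Rabsolu.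
    apply Rle_trans with c; [exact Hk2| apply Rle_abs]. }
  assert (Hc : 0 <= c) by (apply Rle_trans with (Rabs k1); [apply Rabs_pos| exact Hk1]).
  assert (Hcuv : c * u + c * v <= 2 * (c * d)).
  { assert (c * (u + v) <= c * (2 * d)) by (apply Rmult_le_compat_l; lra). lra. }
  replace ((k1 + a1) ^ 2 + b1 ^ 2 + ((k2 + a2) ^ 2 + b2 ^ 2)) with
    (k1 ^ 2 + 2 * (k1 * a1) + (a1 ^ 2 + b1 ^ 2) + (k2 ^ 2 + 2 * (k2 * a2) + (a2 ^ 2 + b2 ^ 2))) by ring.
  replace (2 * (c + d) ^ 2) with (2 * c ^ 2 + 4 * (c * d) + 2 * d ^ 2) by ring.
  lra.
Qed.

Lemma quad_bound Z k x y : Z ^ 2 <= k ^ 2 -> 0 < k -> - (2 * Z * x * y) <= k * (x ^ 2 + y ^ 2).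
Proof.
  intros H Hk.
  assert (k * (k * (x ^ 2 + y ^ 2) + 2 * Z * x * y) = (k * x + Z * y) ^ 2 + (k ^ 2 - Z ^ 2) * y ^ 2) by ring.
  assert (0 <= (k * x + Z * y) ^ 2) by apply pow2_ge_0.
  assert (0 <= (k ^ 2 - Z ^ 2) * y ^ 2) by (apply Rmult_le_pos; [lra| apply pow2_ge_0]).
  assert (0 <= k * (k * (x ^ 2 + y ^ 2) + 2 * Z * x * y)) by lra.
  assert (0 <= k * (x ^ 2 + y ^ 2) + 2 * Z * x * y).
  { apply Rmult_le_reg_l with k; lra. }
  lra.
Qed.

Lemma exp_le x y : x <= y -> exp x <= exp y.
Proof. intros H. destruct (Rle_lt_or_eq_dec _ _ H) as [H'|H']. left; apply exp_increasing; auto. rewrite H'; lra. Qed.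

Lemma ef_ge_bf w P Q t th : bf w P Q t th ^ 2 <= ef w P Q t th.
Proof. unfold ef. assert (0 <= Zf w P t th ^ 2) by apply pow2_ge_0. lra. Qed.
Lemma ef_ge_Z w P Q t th : Zf w P t th ^ 2 <= ef w P Q t th.
Proof. unfold ef. assert (0 <= bf w P Q t th ^ 2) by apply pow2_ge_0. lra. Qed.
Lemma ef_nonneg w P Q t th : 0 <= ef w P Q t th.
Proof. unfold ef. assert (0 <= bf w P Q t th ^ 2) by apply pow2_ge_0. assert (0 <= Zf w P t th ^ 2) by apply pow2_ge_0. lra. Qed.

Lemma ZZ_bound P Q t th : Zf 1 P t th * Zf (-1) P t th <= / 2 * (ef 1 P Q t th + ef (-1) P Q t th).
Proof.
  assert (H1 := ef_ge_Z 1 P Q t th). assert (H2 := ef_ge_Z (-1) P Q t th).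
  assert (0 <= (Zf 1 P t th - Zf (-1) P t th) ^ 2) by apply pow2_ge_0. nra.
Qed.

Theorem lemma2 (P Q : R -> R -> R) (tau0 gamma alpha : R) :
  smooth2 P -> smooth2 Q -> periodic_th P -> periodic_th Q ->
  solves_system P Q tau0 ->
  2 <= tau0 ->
  0 < gamma ->
  (forall th, 1 <= P tau0 th <= tau0 - 1) ->
  (forall th, gamma <= P tau0 th / tau0 <= 1 - gamma) ->
  0 < alpha -> alpha < gamma ->
  Rbar_le (F_fun P Q tau0) (Finite ((gamma - alpha) ^ 2)) ->
  exists C : R, forall tau, tau0 <= tau ->
    forall th,
      exp (2 * P tau th) * ((d_tau Q tau th) ^ 2 + exp (- 2 * tau) * (d_th Q tau th) ^ 2)
        <= C * exp (- alpha * tau).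
Proof.
  intros HsP HsQ HpP HpQ Hsys Ht0 Hg HP1 HP2 Ha Hag HF.
  assert (HP := smooth_diff P HsP). assert (HQ := smooth_diff Q HsQ).
  assert (HpP' : per P) by exact HpP. assert (HpQ' : per Q) by exact HpQ.
  assert (Hg2 : gamma <= / 2) by (destruct (HP2 0); lra).
  set (c0 := / 2 - gamma). set (d0 := gamma - alpha).
  set (L := (/ 2 - alpha) ^ 2).
  set (kap := / 2 - 3 * alpha / 4).
  assert (Hkap : 0 < kap) by (unfold kap; lra).
  assert (HkL : L < kap ^ 2).
  { unfold L, kap. assert (0 < / 2 - alpha) by lra.
    assert (0 < (/ 2 - 3 * alpha / 4) - (/ 2 - alpha)) by lra.
    assert (0 < (/ 2 - 3 * alpha / 4) + (/ 2 - alpha)) by lra.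
    assert (0 < ((/ 2 - 3 * alpha / 4) - (/ 2 - alpha)) * ((/ 2 - 3 * alpha / 4) + (/ 2 - alpha)))
      by (apply Rmult_lt_0_compat; lra).
    nra. }
  assert (HL0 : 0 <= L) by (unfold L; apply pow2_ge_0).
  set (rho := (kap ^ 2 - L) / 3).
  assert (Hrho : 0 < rho) by (unfold rho; lra).
  set (L1 := L + rho). set (L2 := L + 2 * rho).
  destruct (F_extract _ _ _ HF) as [S1 [S2 [HS1 [HS2 HS]]]].
  assert (Hinit : forall th1 th2, ef 1 P Q tau0 th1 + ef (-1) P Q tau0 th2 <= 2 * L).
  { intros th1 th2.
    specialize (HS1 th1). specialize (HS2 th2). cbv beta in HS1, HS2.
    assert (Eb1 : bf 1 P Q tau0 th1 ^ 2 = exp (2 * P tau0 th1) * (d_tau Q tau0 th1 + exp (- tau0) * d_th Q tau0 th1) ^ 2)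
      by (unfold bf; rewrite exp_2; ring).
    assert (Eb2 : bf (-1) P Q tau0 th2 ^ 2 = exp (2 * P tau0 th2) * (d_tau Q tau0 th2 - exp (- tau0) * d_th Q tau0 th2) ^ 2)
      by (unfold bf; rewrite exp_2; ring).
    rewrite <- Eb1 in HS1. rewrite <- Eb2 in HS2.
    assert (Ez1 : Zf 1 P tau0 th1 = (P tau0 th1 / tau0 - / 2) + (d_tau P tau0 th1 - / tau0 * P tau0 th1 + exp (- tau0) * d_th P tau0 th1))
      by (unfold Zf; field; lra).
    assert (Ez2 : Zf (-1) P tau0 th2 = (P tau0 th2 / tau0 - / 2) + (d_tau P tau0 th2 - / tau0 * P tau0 th2 - exp (- tau0) * d_th P tau0 th2))
      by (unfold Zf; field; lra).
    unfold ef. rewrite Ez1, Ez2.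
    replace (2 * L) with (2 * (c0 + d0) ^ 2) by (unfold L, c0, d0; ring).
    apply alg0 with S1 S2; auto.
    - destruct (HP2 th1). apply Rabs_le. unfold c0. lra.
    - destruct (HP2 th2). apply Rabs_le. unfold c0. lra.
    - unfold d0; lra. }
  assert (Hsys' : forall t, tau0 <= t -> True) by auto.
  set (B2 := fun t => 2 * L1 - rho * exp (- (t - tau0))).
  assert (St2 : forall t th1 th2, tau0 <= t -> ef 1 P Q t th1 + ef (-1) P Q t th2 < B2 t).
  { apply GBL.
    - apply ct_ef; auto.
    - apply ct_ef; auto.
    - apply pr_ef; auto.
    - apply pr_ef; auto.
    - intros s. unfold B2. auto_derive. exact I.
    - intros th1 th2. specialize (Hinit th1 th2). unfold B2.
      rewrite Rminus_eq_0, Ropp_0, exp_0. unfold L1. lra.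
    - intros t th1 th2 Ht Hall Heq.
      exists (- ef 1 P Q t th1 + Zf 1 P t th1 * Zf (-1) P t th1),
             (- ef (-1) P Q t th2 + Zf 1 P t th2 * Zf (-1) P t th2).
      split.
      { assert (H := ef_char P Q tau0 1 (th1 - exp (- t)) t HP HQ Hsys (Rlt_le _ _ Ht) (or_introl eq_refl)).
        replace (th1 - exp (- t) + 1 * exp (- t)) with th1 in H by ring. exact H. }
      split.
      { assert (H := ef_char P Q tau0 (-1) (th2 + exp (- t)) t HP HQ Hsys (Rlt_le _ _ Ht) (or_intror eq_refl)).
        replace (th2 + exp (- t) + -1 * exp (- t)) with th2 in H by ring. exact H. }
      replace (Derive B2 t) with (rho * exp (- (t - tau0))).
      2:{ symmetry. apply is_derive_unique. unfold B2. auto_derive. exact I. unfold Rminus. ring. }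
      assert (Z1 := ZZ_bound P Q t th1). assert (Z2 := ZZ_bound P Q t th2).
      assert (A1 := Hall th1 th1). assert (A2 := Hall th2 th2).
      assert (0 < rho * exp (- (t - tau0))) by (apply Rmult_lt_0_compat; [lra| apply exp_pos]).
      lra. }
  assert (St2' : forall t th1 th2, tau0 <= t -> ef 1 P Q t th1 + ef (-1) P Q t th2 < 2 * L1).
  { intros t th1 th2 Ht. specialize (St2 t th1 th2 Ht). unfold B2 in St2.
    assert (0 < rho * exp (- (t - tau0))) by (apply Rmult_lt_0_compat; [lra| apply exp_pos]). lra. }
  set (K := 2 * L1 + 1).
  assert (HK : 0 < K) by (unfold K, L1; lra).
  set (B3 := fun t => L2 + K * exp (- ((t - tau0) / 2))).
  assert (HB3d : forall t, is_derive B3 t (- (K / 2) * exp (- ((t - tau0) / 2)))).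
  { intros t. unfold B3. auto_derive. exact I. unfold Rminus, Rdiv. field. }
  assert (St3p : forall t th, tau0 <= t -> ef 1 P Q t th < B3 t).
  { intros t th Ht.
    assert (H : forall t th1 th2, tau0 <= t -> ef 1 P Q t th1 + (fun _ _ : R => 0) t th2 < B3 t).
    2:{ specialize (H t th 0 Ht). simpl in H. lra. }
    apply GBL.
    - apply ct_ef; auto.
    - intros; apply continuity_2d_pt_const.
    - apply pr_ef; auto.
    - apply pr_0.
    - intros s. eexists. apply HB3d.
    - intros th1 _. specialize (Hinit th1 th1). assert (Hn := ef_nonneg (-1) P Q tau0 th1).
      unfold B3. rewrite Rminus_eq_0, Rdiv_0_l, Ropp_0, exp_0. unfold K, L2, L1. lra.
    - intros t' th1 th2 Ht' Hall Heq.
      exists (- ef 1 P Q t' th1 + Zf 1 P t' th1 * Zf (-1) P t' th1), 0.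
      split.
      { assert (H1 := ef_char P Q tau0 1 (th1 - exp (- t')) t' HP HQ Hsys (Rlt_le _ _ Ht') (or_introl eq_refl)).
        replace (th1 - exp (- t') + 1 * exp (- t')) with th1 in H1 by ring. exact H1. }
      split.
      { exact (proj2 (is_derive_Reals _ _ _) (derivable_pt_lim_const 0 t')). }
      rewrite (is_derive_unique _ _ _ (HB3d t')).
      assert (Z1 := ZZ_bound P Q t' th1).
      assert (A1 := St2' t' th1 th1 (Rlt_le _ _ Ht')).
      assert (0 <= K * exp (- ((t' - tau0) / 2))) by (apply Rmult_le_pos; [lra| left; apply exp_pos]).
      unfold B3 in Heq. unfold L1, L2 in *. lra. }
  assert (St3m : forall t th, tau0 <= t -> ef (-1) P Q t th < B3 t).
  { intros t th Ht.
    assert (H : forall t th1 th2, tau0 <= t -> (fun _ _ : R => 0) t th1 + ef (-1) P Q t th2 < B3 t).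
    2:{ specialize (H t 0 th Ht). simpl in H. lra. }
    apply GBL.
    - intros; apply continuity_2d_pt_const.
    - apply ct_ef; auto.
    - apply pr_0.
    - apply pr_ef; auto.
    - intros s. eexists. apply HB3d.
    - intros _ th2. specialize (Hinit th2 th2). assert (Hn := ef_nonneg 1 P Q tau0 th2).
      unfold B3. rewrite Rminus_eq_0, Rdiv_0_l, Ropp_0, exp_0. unfold K, L2, L1. lra.
    - intros t' th1 th2 Ht' Hall Heq.
      exists 0, (- ef (-1) P Q t' th2 + Zf 1 P t' th2 * Zf (-1) P t' th2).
      split.
      { exact (proj2 (is_derive_Reals _ _ _) (derivable_pt_lim_const 0 t')). }
      split.
      { assert (H1 := ef_char P Q tau0 (-1) (th2 + exp (- t')) t' HP HQ Hsys (Rlt_le _ _ Ht') (or_intror eq_refl)).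
        replace (th2 + exp (- t') + -1 * exp (- t')) with th2 in H1 by ring. exact H1. }
      rewrite (is_derive_unique _ _ _ (HB3d t')).
      assert (Z1 := ZZ_bound P Q t' th2).
      assert (A1 := St2' t' th2 th2 (Rlt_le _ _ Ht')).
      assert (0 <= K * exp (- ((t' - tau0) / 2))) by (apply Rmult_le_pos; [lra| left; apply exp_pos]).
      unfold B3 in Heq. unfold L1, L2 in *. lra. }
  set (T1 := tau0 + 2 * ln (K / rho + 1)).
  assert (HKr : 0 < K / rho + 1) by (assert (0 < K / rho) by (apply Rdiv_lt_0_compat; lra); lra).
  assert (HT1 : tau0 <= T1).
  { unfold T1. assert (0 <= ln (K / rho + 1)). { rewrite <- ln_1. apply ln_le; try lra.
      assert (0 < K / rho) by (apply Rdiv_lt_0_compat; lra); lra. } lra. }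
  assert (HB3k : forall t, T1 <= t -> B3 t < kap ^ 2).
  { intros t Ht. unfold B3.
    assert (E : exp (- ((t - tau0) / 2)) <= / (K / rho + 1)).
    { rewrite <- (exp_ln (K / rho + 1)) by exact HKr. rewrite <- exp_Ropp. apply exp_le.
      unfold T1 in Ht. lra. }
    assert (E2 : K * / (K / rho + 1) < rho).
    { replace (K * / (K / rho + 1)) with (rho * (K / (K + rho))) by (field; split; lra).
      assert (K / (K + rho) < 1). { apply (Rmult_lt_reg_r (K + rho)). lra. unfold Rdiv. rewrite Rmult_assoc, Rinv_l by lra. lra. }
      nra. }
    assert (K * exp (- ((t - tau0) / 2)) <= K * / (K / rho + 1)) by (apply Rmult_le_compat_l; lra).
    unfold L2, rho in *. lra. }
  assert (HZp : forall t th, T1 <= t -> Zf 1 P t th ^ 2 <= kap ^ 2).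
  { intros t th Ht. assert (A := St3p t th ltac:(lra)). assert (B := HB3k t Ht).
    assert (C := ef_ge_Z 1 P Q t th). lra. }
  assert (HZm : forall t th, T1 <= t -> Zf (-1) P t th ^ 2 <= kap ^ 2).
  { intros t th Ht. assert (A := St3m t th ltac:(lra)). assert (B := HB3k t Ht).
    assert (C := ef_ge_Z (-1) P Q t th). lra. }
  set (M := 2 * L1).
  assert (HM : 0 < M) by (unfold M, L1; lra).
  set (B5 := fun t => M * exp (- alpha * (t - T1))).
  assert (HB5d : forall t, is_derive B5 t (- alpha * B5 t)).
  { intros t. unfold B5. auto_derive. exact I. unfold Rminus. ring. }
  assert (St5 : forall t th1 th2, T1 <= t -> (fun u v => bf 1 P Q u v ^ 2) t th1 + (fun u v => bf (-1) P Q u v ^ 2) t th2 < B5 t).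
  { apply GBL.
    - apply ct_bf2; auto.
    - apply ct_bf2; auto.
    - apply pr_bf2; auto.
    - apply pr_bf2; auto.
    - intros s. eexists. apply HB5d.
    - intros th1 th2. simpl. unfold B5. rewrite Rminus_eq_0, Rmult_0_r, exp_0, Rmult_1_r.
      assert (A := St2' T1 th1 th2 HT1). assert (B := ef_ge_bf 1 P Q T1 th1).
      assert (C := ef_ge_bf (-1) P Q T1 th2). simpl in B, C. unfold M. lra.
    - intros t th1 th2 Ht Hall Heq. simpl in Hall, Heq.
      exists (- bf 1 P Q t th1 ^ 2 - 2 * Zf 1 P t th1 * bf 1 P Q t th1 * bf (-1) P Q t th1),
             (- bf (-1) P Q t th2 ^ 2 - 2 * Zf (-1) P t th2 * bf 1 P Q t th2 * bf (-1) P Q t th2).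
      assert (Ht' : tau0 <= t) by lra.
      split.
      { assert (H := bf_char P Q tau0 1 (th1 - exp (- t)) t HP HQ Hsys Ht' (or_introl eq_refl)).
        replace (th1 - exp (- t) + 1 * exp (- t)) with th1 in H by ring. exact H. }
      split.
      { assert (H := bf_char P Q tau0 (-1) (th2 + exp (- t)) t HP HQ Hsys Ht' (or_intror eq_refl)).
        replace (th2 + exp (- t) + -1 * exp (- t)) with th2 in H by ring. exact H. }
      rewrite (is_derive_unique _ _ _ (HB5d t)).
      assert (Q1 := quad_bound (Zf 1 P t th1) kap (bf 1 P Q t th1) (bf (-1) P Q t th1) (HZp t th1 (Rlt_le _ _ Ht)) Hkap).
      assert (Q2 := quad_bound (Zf (-1) P t th2) kap (bf 1 P Q t th2) (bf (-1) P Q t th2) (HZm t th2 (Rlt_le _ _ Ht)) Hkap).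
      assert (A1 := Hall th1 th1). assert (A2 := Hall th2 th2).
      assert (K1 : kap * (bf 1 P Q t th1 ^ 2 + bf (-1) P Q t th1 ^ 2) <= kap * B5 t) by (apply Rmult_le_compat_l; lra).
      assert (K2 : kap * (bf 1 P Q t th2 ^ 2 + bf (-1) P Q t th2 ^ 2) <= kap * B5 t) by (apply Rmult_le_compat_l; lra).
      assert (HB5p : 0 < B5 t) by (unfold B5; apply Rmult_lt_0_compat; [lra| apply exp_pos]).
      assert (alpha * B5 t < 3 * alpha / 2 * B5 t) by nra.
      assert (kap * B5 t = / 2 * B5 t - 3 * alpha / 4 * B5 t) by (unfold kap; ring). lra. }
  exists ((L1 + M) * exp (alpha * T1)).
  intros tau Htau th.
  assert (Eq : exp (2 * P tau th) * (d_tau Q tau th ^ 2 + exp (- 2 * tau) * d_th Q tau th ^ 2)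
     = / 2 * (bf 1 P Q tau th ^ 2 + bf (-1) P Q tau th ^ 2)).
  { unfold bf. rewrite exp_2, exp_m2. field. }
  rewrite Eq.
  assert (Ee : exp (alpha * T1) * exp (- alpha * tau) = exp (alpha * (T1 - tau))).
  { rewrite <- exp_plus. f_equal. ring. }
  assert (HL1 : 0 < L1) by (unfold L1; lra).
  assert (Hepos : 0 < exp (alpha * T1) * exp (- alpha * tau)) by (apply Rmult_lt_0_compat; apply exp_pos).
  destruct (Rle_lt_dec T1 tau) as [H1|H1].
  - assert (A := St5 tau th th H1). simpl in A. unfold B5 in A.
    replace (exp (- alpha * (tau - T1))) with (exp (alpha * T1) * exp (- alpha * tau)) in A
      by (rewrite <- exp_plus; f_equal; ring).
    assert (L1 * (exp (alpha * T1) * exp (- alpha * tau)) >= 0) by nra.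
    replace ((L1 + M) * exp (alpha * T1) * exp (- alpha * tau)) with
      (L1 * (exp (alpha * T1) * exp (- alpha * tau)) + M * (exp (alpha * T1) * exp (- alpha * tau))) by ring.
    nra.
  - assert (A := St2' tau th th Htau).
    assert (B := ef_ge_bf 1 P Q tau th). assert (C := ef_ge_bf (-1) P Q tau th).
    assert (E1 : 1 <= exp (alpha * (T1 - tau))).
    { rewrite <- exp_0. apply exp_le. apply Rmult_le_pos; lra. }
    rewrite <- Ee in E1.
    replace ((L1 + M) * exp (alpha * T1) * exp (- alpha * tau)) with
      (L1 * (exp (alpha * T1) * exp (- alpha * tau)) + M * (exp (alpha * T1) * exp (- alpha * tau))) by ring.
    assert (M * (exp (alpha * T1) * exp (- alpha * tau)) >= 0) by nra.
    assert (L1 <= L1 * (exp (alpha * T1) * exp (- alpha * tau))) by nra.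
    lra.
Qed.
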